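(* Every Lucasian GNS is $\mathbf P$-Green: for every prime $p$, every power $m$ of $p$, and all $a,b\mid m$, one has $s(m)\equiv\frac m\ell\frac{s(a)s(b)}{s(g)}\bmod s(a)s(b)$, where $g=\gcd(a,b)$, $\ell=\operatorname{lcm}(a,b)$.
   Context: A GNS over a ring $D$ is $s\colon\mathbf N\to D$ with $s(0)=0$, $s(n)$ a non-zero-divisor for $n>0$, and $s(n-k)\mid s(n)-s(k)$ for $n>k>0$. It is Lucasian if $s(a+b)\equiv s(a)+s(b)\bmod s(a)s(b)$ for all $a,b$. $\mathbf P$-Green means $\mathcal F$-Green for $\mathcal F=\bigcup_p p^{\mathbf N}$ (prime powers), where $\mathcal F$-Green means the displayed congruence holds for all $m\in\mathcal F$ and $a,b\mid m$. *)

(* Defs.v *)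
From mathcomp Require Import all_boot all_order all_algebra.
Set Implicit Arguments. Unset Strict Implicit. Unset Printing Implicit Defensive.
Import GRing.Theory.
Local Open Scope ring_scope.

Definition rdvd (D : comPzRingType) (x y : D) : Prop := exists c : D, y = c * x.

Definition nzd (D : comPzRingType) (x : D) : Prop := forall y : D, x * y = 0 -> y = 0.

Definition rcong (D : comPzRingType) (x y z : D) : Prop := rdvd z (x - y).

Definition GNS (D : comPzRingType) (s : nat -> D) : Prop :=
  [/\ s 0%N = 0,
      (forall n, (0 < n)%N -> nzd (s n)) &
      (forall n k, (0 < k)%N -> (k < n)%N -> rdvd (s (n - k)%N) (s n - s k))].

Definition Lucasian (D : comPzRingType) (s : nat -> D) : Prop :=
  GNS s /\ forall a b : nat, rcong (s (a + b)%N) (s a + s b) (s a * s b).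

(* The quotient s(a)s(b)/s(g) is expressed as an element q with
   q * s(g) = s(a) s(b) (unique since s(g) is a non-zero-divisor). *)
Definition PGreen (D : comPzRingType) (s : nat -> D) : Prop :=
  forall p k a b : nat, prime p -> (a %| p ^ k)%N -> (b %| p ^ k)%N ->
    exists q : D, q * s (gcdn a b) = s a * s b /\
      rcong (s (p ^ k)%N) (((p ^ k) %/ lcmn a b)%N%:R * q) (s a * s b).

(* Main.v *)
Require Import Defs.
From mathcomp Require Import all_boot all_order all_algebra.
From mathcomp Require Import ring.
Import GRing.Theory.

Section Aux.
Local Open Scope ring_scope.
Variables (D : comPzRingType) (s : nat -> D).
Hypothesis s0 : s 0%N = 0.
Hypothesis luc : forall a b : nat, rcong (s (a + b)%N) (s a + s b) (s a * s b).

Lemma L1 a c : rdvd (s a) (s (c * a)%N).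
Proof.
elim: c => [|c [f Hf]]; first by exists 0; rewrite mul0n s0 mul0r.
have [e He] := luc (c * a) a.
exists (e * f * s a + f + 1).
rewrite mulSn addnC.
have -> : s (c * a + a)%N = (s (c * a + a)%N - (s (c * a)%N + s a)) + s (c * a)%N + s a by ring.
rewrite He Hf; ring.
Qed.

Lemma L2 b c : rdvd (s b * s b) (s (c * b)%N - c%:R * s b).
Proof.
elim: c => [|c [g Hg]]; first by exists 0; rewrite mul0n s0 mul0r; ring.
have [e He] := luc (c * b) b.
have [f Hf] := L1 b c.
exists (e * f + g).
rewrite mulSn addnC -addn1 natrD.
have -> : s (c * b + b)%N - (c%:R + 1%:R) * s b =
  (s (c * b + b)%N - (s (c * b)%N + s b)) + (s (c * b)%N - c%:R * s b) by ring.
rewrite He Hg Hf; ring.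
Qed.

Lemma L3 a b c : (a %| b)%N -> rdvd (s a * s b) (s (c * b)%N - c%:R * s b).
Proof.
move=> /dvdnP [d ->].
have [h Hh] := L1 a d.
have [g Hg] := L2 (d * a) c.
exists (g * h); rewrite Hg Hh; ring.
Qed.
End Aux.

Theorem corollary5p14 (D : comPzRingType) (s : nat -> D) :
  Lucasian s -> PGreen s.
Proof.
move=> [[s0 _ _] luc] p k a b pp ha hb.
have [i _ Ea] := (dvdn_pfactor _ _ pp) ha.
have [j _ Eb] := (dvdn_pfactor _ _ pp) hb; subst a b.
have p0 : (0 < p)%N by apply: prime_gt0.
case: (leqP i j) => hij.
- have dv : (p ^ i %| p ^ j)%N by rewrite dvdn_exp2l.
  have -> : gcdn (p ^ i) (p ^ j) = (p ^ i)%N by apply/gcdn_idPl.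
  have -> : lcmn (p ^ i) (p ^ j) = (p ^ j)%N by apply/lcmn_idPr.
  exists (s (p ^ j)%N); split; first by rewrite GRing.mulrC.
  rewrite -{1}(divnK hb).
  exact: L3.
- have dv : (p ^ j %| p ^ i)%N by rewrite dvdn_exp2l // ltnW.
  have -> : gcdn (p ^ i) (p ^ j) = (p ^ j)%N by apply/gcdn_idPr.
  have -> : lcmn (p ^ i) (p ^ j) = (p ^ i)%N by apply/lcmn_idPl.
  exists (s (p ^ i)%N); split; first by [].
  rewrite -{1}(divnK ha).
  have [e He] := @L3 D s s0 luc _ _ (p ^ k %/ p ^ i) dv.
  by exists e; rewrite He; ring.
Qed.
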